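(* Under the standing setup in the context, there are constants $K\ge1$, $C\ge0$ (depending only on $b,c,L,f$) such that \[\rho_\phi([x],[y])\le K\rho(x,y)+C\] for all $x,y\in S$ with $\rho(x,y)< f$.
   Context: A semi-metric on a set $Z$ is a function $d:Z\times Z\to[0,\infty)$ with $d(x,y)=0$ iff $x=y$ and $d(x,y)=d(y,x)$. For $b\ge1$, $c\ge0$, a $(b,c)$-metric is a semi-metric with $d(x,z)\le b(d(x,y)+d(y,z))+c$ for all $x,y,z$. Standing setup. $X$ is a topological space (in the paper an $n$-manifold) carrying a $(b,c)$-metric $\rho$. A collapsing set consists of: a subset $S\subseteq X$; a family $\mathcal F$ of pairwise disjoint nonempty subsets of $S$ (''fibers'') whose union is $S$; and a subset $T\subseteq S$ meeting each fiber in exactly one point. The fibering is bounded: $f:=\sup_{F\in\mathcal F}\sup_{u,v\in F}\rho(u,v)<\infty$ (''length of the longest fiber''). For $a,a'\in T$, the length of a continuous path $\gamma:[0,1]\to T$ is $\ell(\gamma)=\sup\sum_{i=1}^k\rho(\gamma(t_{i-1}),\gamma(t_i))$ over partitions $0=t_0<\dots<t_k=1$, and $\rho_p(a,a')$ is the infimum of $\ell(\gamma)$ over continuous paths in $T$ from $a$ to $a'$. $T$ is a Lipschitz curve: there is $L\ge1$ with $\rho_p(a,a')\le L\,\rho(a,a')$ for all $a,a'\in T$. The collapsing relation is $x\sim y$ iff $x=y$ or $x,y$ lie in a common fiber; $X^*=X/\!\sim$, $\phi(x)=[x]$. For $x\in X$ let $r_x=\inf_{s\in S}\rho(x,s)$;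 assume this infimum is attained and fix $x_S\in S$ with $\rho(x,x_S)=r_x$, taking $x_S=x$ when $x\in S$. Let $x'$ denote the unique point of $T$ in the fiber containing $x_S$. The collapsed metric is $\rho_\phi([x],[y])=\rho(x,y)$ if $x,y\notin S$ and $\rho(x,y)\le r_x+r_y$, and $\rho_\phi([x],[y])=\rho_p(x',y')+r_x+r_y$ otherwise. *)

(* Defs.v *)
From HB Require Import structures.
From mathcomp Require Import all_boot all_order all_algebra.
From mathcomp Require Import all_classical all_reals all_analysis.
Set Implicit Arguments. Unset Strict Implicit. Unset Printing Implicit Defensive.
Import Order.TTheory GRing.Theory Num.Theory.
Local Open Scope classical_set_scope.
Local Open Scope ring_scope.

Section Defs.
Variables (R : realType) (X : topologicalType).

Definition is_semimetric (rho : X -> X -> R) : Prop :=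
  (forall x y, 0 <= rho x y) /\
  (forall x y, rho x y = 0 <-> x = y) /\
  (forall x y, rho x y = rho y x).

Definition is_bc_metric (b c : R) (rho : X -> X -> R) : Prop :=
  is_semimetric rho /\
  forall x y z, rho x z <= b * (rho x y + rho y z) + c.

Definition same_fiber (Fam : set (set X)) (u v : X) : Prop :=
  exists F, Fam F /\ F u /\ F v.

Definition collapsing_set (S : set X) (Fam : set (set X)) (T : set X) : Prop :=
  (forall F, Fam F -> F !=set0) /\
  (forall F G, Fam F -> Fam G -> F `&` G !=set0 -> F = G) /\
  (forall x, S x <-> exists F, Fam F /\ F x) /\
  T `<=` S /\
  (forall F, Fam F -> exists t, F t /\ T t /\ forall t', F t' -> T t' -> t' = t).

Definition fiber_length (rho : X -> X -> R) (Fam : set (set X)) : \bar R :=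
  ereal_sup [set l | exists F u v, Fam F /\ F u /\ F v /\ l = (rho u v)%:E].

Definition path_length (rho : X -> X -> R) (g : R -> X) : \bar R :=
  ereal_sup [set l | exists (k : nat) (t : nat -> R),
     t 0%N = 0 /\ t k = 1 /\ (forall i, (i < k)%N -> t i < t i.+1) /\
     l = (\sum_(i < k) rho (g (t i)) (g (t i.+1)))%:E].

Definition rho_p (rho : X -> X -> R) (T : set X) (a a' : X) : \bar R :=
  ereal_inf [set l | exists g : R -> X,
     {within `[0, 1], continuous g} /\
     (forall s, 0 <= s <= 1 -> T (g s)) /\
     g 0 = a /\ g 1 = a' /\ l = path_length rho g].

Definition r_dist (rho : X -> X -> R) (S : set X) (x : X) : \bar R :=
  ereal_inf [set (rho x s)%:E | s in S].

(* collapsed metric, computed on representatives x, y of [x], [y];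
   xS x is the chosen nearest point of S, tp s the point of T in the fiber of s *)
Definition rho_phi (rho : X -> X -> R) (S T : set X) (xS tp : X -> X)
    (x y : X) : \bar R :=
  if `[< ~ S x /\ ~ S y /\ ((rho x y)%:E <= r_dist rho S x + r_dist rho S y)%E >]
  then (rho x y)%:E
  else (rho_p rho T (tp (xS x)) (tp (xS y)) + r_dist rho S x + r_dist rho S y)%E.

End Defs.

(* Main.v *)
Require Import Defs.
From HB Require Import structures.
From mathcomp Require Import all_boot all_order all_algebra.
From mathcomp Require Import all_classical all_reals all_analysis.
From mathcomp Require Import lra.
Import Order.TTheory GRing.Theory Num.Theory.
Local Open Scope classical_set_scope.
Local Open Scope ring_scope.

Lemma aux (R : realFieldType) (b c fm A B D r E : R) :
  E <= b*(A+D)+c -> b*A<=b*fm -> b*D <= b*(b*(r+B)+c) -> b*(b*B) <= b*(b*fm) ->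
  E <= b^+2*r + (b*fm + b^+2*fm + b*c + c).
Proof. move=> h1 h2 h3 h4; rewrite expr2; lra. Qed.

Theorem lemma2p4 (R : realType) (b c L f : R) :
  1 <= b -> 0 <= c -> 1 <= L ->
  exists K C : R, 1 <= K /\ 0 <= C /\
  forall (X : topologicalType) (rho : X -> X -> R)
         (S : set X) (Fam : set (set X)) (T : set X) (xS tp : X -> X),
    is_bc_metric b c rho ->
    collapsing_set S Fam T ->
    fiber_length rho Fam = f%:E ->
    (forall a a', T a -> T a' -> (rho_p rho T a a' <= (L * rho a a')%:E)%E) ->
    (forall x, S (xS x) /\ (rho x (xS x))%:E = r_dist rho S x) ->
    (forall x, S x -> xS x = x) ->
    (forall s, S s -> T (tp s) /\ same_fiber Fam s (tp s)) ->
    forall x y, S x -> S y -> rho x y < f ->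
      (rho_phi rho S T xS tp x y <= (K * rho x y + C)%:E)%E.
Proof.
move=> b1 c0 L1.
have fm0 : 0 <= Num.max f 0 by rewrite le_max lexx orbT.
have fmf : f <= Num.max f 0 by rewrite le_max lexx.
exists (L * b ^+ 2), (L * (b * Num.max f 0 + b ^+ 2 * Num.max f 0 + b * c + c)).
have b0 : 0 <= b by apply: le_trans b1; rewrite ler01.
have L0 : 0 <= L by apply: le_trans L1; rewrite ler01.
split; first by rewrite -[1]mulr1; apply: ler_pM => //; try exact: ler01; exact: exprn_ege1.
split; first by apply: mulr_ge0 => //; rewrite !addr_ge0 // mulr_ge0 // exprn_ge0.
move=> X rho S Fam T xS tp [[rho0 [rhoeq rhoC]] tri] coll hf hL hnear hS htp x y Sx Sy rxy.
rewrite /rho_phi asboolF; last by case.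
have rd : forall z, S z -> r_dist rho S z = 0%:E.
  by move=> z Sz; rewrite -(proj2 (hnear z)) hS // (proj2 (rhoeq z z)).
rewrite (hS x Sx) (hS y Sy) (rd x Sx) (rd y Sy) !adde0.
have [Tx _] := htp x Sx; have [Ty _] := htp y Sy.
apply: le_trans (hL _ _ Tx Ty) _; rewrite lee_fin.
have fib : forall s, S s -> rho s (tp s) <= f.
  move=> s Ss; have [_ [F [FF [Fs Ft]]]] := htp s Ss.
  rewrite -lee_fin -hf /fiber_length; apply: ereal_sup_ubound.
  by exists F, s, (tp s).
have f1 := fib x Sx; have f2 := fib y Sy.
have e1 := tri (tp x) x (tp y); have e2 := tri x y (tp y).
have p1 := rho0 x (tp x); have p2 := rho0 y (tp y); have p3 := rho0 x y.
have p4 := rho0 x (tp y).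
have : rho (tp x) (tp y) <= b ^+ 2 * rho x y + (b * Num.max f 0 + b ^+ 2 * Num.max f 0 + b * c + c).
  have q1 : b * rho (tp x) x <= b * Num.max f 0.
    by apply: ler_wpM2l => //; rewrite rhoC; apply: le_trans fmf.
  have q2 : b * rho x (tp y) <= b * (b * (rho x y + rho y (tp y)) + c).
    by apply: ler_wpM2l => //; apply: le_trans e2 _; rewrite addrC.
  have q3 : b * (b * rho y (tp y)) <= b * (b * Num.max f 0).
    by apply: ler_wpM2l => //; apply: ler_wpM2l => //; apply: le_trans fmf.
  exact: aux e1 q1 q2 q3.
move=> h; rewrite -mulrA -mulrDr; exact: ler_wpM2l h.
Qed.
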